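(* Let $p$ be a prime and $n \geq 2$. Let $N$ be the cyclic group of order $p^n$, let $K$ be the Sylow $p$-subgroup of $\mathrm{Aut}(N)$, and let $G := N \rtimes K$ (with the natural action). Then $|G:G'| = p^n$, and $|\gamma_i(G):\gamma_{i+1}(G)| = p$ for every $i = 2,\dots,n$.
   Context: $G'$ is the commutator subgroup of $G$, and $\gamma_i(G)$ denotes the $i$-th term of the lower central series, with $\gamma_1(G)=G$ and $\gamma_{i+1}(G)=[\gamma_i(G),G]$. *)

(* Defs.v *)
From mathcomp Require Import all_boot all_fingroup all_solvable.
Set Implicit Arguments. Unset Strict Implicit. Unset Printing Implicit Defensive.

(* Main.v *)
Require Import Defs.
From mathcomp Require Import all_boot all_fingroup all_solvable.
From mathcomp Require Import zify.
Set Implicit Arguments. Unset Strict Implicit. Unset Printing Implicit Defensive.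
Local Open Scope group_scope.

Lemma memR_norm (gT : finGroupType) (N : {group gT}) x k :
  x \in N -> k \in 'N(N) -> [~ x, k] \in N.
Proof. by move=> xN kN; rewrite /commg groupM ?groupV // memJ_norm. Qed.

Lemma comm_morph (gT : finGroupType) (N : {group gT}) k :
  abelian N -> k \in 'N(N) ->
  {in N &, {morph (fun z => [~ z, k]) : a b / a * b}}.
Proof.
move=> abN nk a b aN bN /=; rewrite commMgJ; congr (_ * _).
apply/conjg_fixP; apply/commgP.
exact: (centsP abN) (memR_norm aN nk) b bN.
Qed.

Lemma pow_le (p a b : nat) : prime p -> p ^ a <= p ^ b -> a <= b.
Proof. by move=> pp; rewrite leq_exp2l // prime_gt1. Qed.

Theorem lemma2p7 (gT : finGroupType) (p n : nat) (G N K : {group gT}) :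
  prime p -> 2 <= n ->
  cyclic N -> #|N| = (p ^ n)%N ->
  N ><| K = G ->
  'C_K(N) = 1 ->
  p.-Sylow(Aut N) (conj_aut N @* K) ->
  #|G : G^`(1)| = (p ^ n)%N /\
  (forall i : nat, 2 <= i <= n -> #|'L_i(G) : 'L_i.+1(G)| = p).
Proof.
move=> pr_p n2 cycN oN sdG CKN sylK.
have p1 := prime_gt1 pr_p; have p0 := prime_gt0 pr_p.
have [nsNG sKG defG nNK tiNK] := sdprod_context sdG.
have sNG := normal_sub nsNG; have nNG := normal_norm nsNG.
have oKf : #|conj_aut N @* K| = #|K|.
  by rewrite card_morphim (setIidPr nNK) ker_conj_aut -indexgI CKN indexg1.
have oK : #|K| = (p ^ n.-1)%N.
  rewrite -oKf (card_Hall sylK) card_Aut_cyclic // oN totient_pfactor //; last first.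
    by apply: leq_trans n2.
  rewrite partnM ?expn_gt0 ?p0 //; last by rewrite -subn1 subn_gt0.
  rewrite [in X in (X * _)%N]part_p'nat ?mul1n ?part_pnat_id ?pnatX ?pnat_id // p'natE //.
  apply/negP => /dvdn_leq; rewrite -subn1 subn_gt0 => /(_ p1).
  clear -p0; lia.
have oG : #|G| = (p ^ n * p ^ n.-1)%N by rewrite -(sdprod_card sdG) oN oK.
have pG : p.-group G by rewrite /pgroup oG -expnD pnatX pnat_id.
have nilG := pgroup_nil pG.
have abN := cyclic_abelian cycN.
have abK : abelian K.
  have injf : 'injm (restrm nNK (conj_aut N)).
    by rewrite ker_restrm ker_conj_aut CKN.
  rewrite -(injm_abelian injf (subxx K)) morphim_restrm setIid.
  exact: abelianS (pHall_sub sylK) (Aut_cyclic_abelian cycN).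
have derG : G^`(1) = [~: N, G].
  apply/eqP; rewrite eqEsubset (commgSS sNG (subxx G)) andbT.
  have nMG : G \subset 'N([~: N, G]) by rewrite normsR //; exact: normG.
  apply: der1_min => //.
  have nMN := subset_trans sNG nMG.
  have -> : G / [~: N, G] = (N / [~: N, G]) * (K / [~: N, G]) by rewrite -quotientMl // defG.
  rewrite abelianM !quotient_abelian //= quotient_cents2r //.
  by rewrite commGC commgSS.
have [x defN] := cyclicP cycN.
have ox : #[x] = (p ^ n)%N by rewrite /order -defN.
have xN : x \in N by rewrite defN cycle_id.
have [k0 [k0K ok0]] : exists k0, k0 \in K /\ ~~ (#[[~ x, k0]] %| p ^ (n - 2)).
  case: (pickP [pred k in K | ~~ (#[[~ x, k]] %| p ^ (n - 2))]) => [k /andP[kK nd] | allK].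
    by exists k.
  exfalso.
  pose U := <[x ^+ (p ^ 2)]>.
  have inU : forall k, k \in K -> [~ x, k] \in U.
    move=> k kK; have := allK k; rewrite /= kK /= => /negbFE dvd.
    have cN : [~ x, k] \in N := memR_norm xN (subsetP nNK k kK).
    have dvx : #[[~ x, k]] %| #[x].
      by rewrite ox (dvdn_trans dvd) // dvdn_exp2l // leq_subr.
    have H2 := cycle_sub_group dvx.
    have : <[[~ x, k]]>%G \in [set H : {group gT} | H \subset <[x]> & #|H| == #[[~ x, k]]].
      have cx : [~ x, k] \in <[x]> by rewrite -defN.
      by rewrite inE /= cycle_subG cx eqxx.
    rewrite H2 => /set1P /(congr1 val) /= Ec.
    have : [~ x, k] \in <[[~ x, k]]> := cycle_id _.
    rewrite Ec; apply: subsetP; rewrite cycle_subG ox.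
    have -> : (p ^ n %/ #[[~ x, k]] = p ^ 2 * (p ^ (n - 2) %/ #[[~ x, k]]))%N.
      by rewrite muln_divA // -expnD subnKC.
    by rewrite expgM mem_cycle.
  have le : #|K| <= #|U|.
    rewrite -(card_lcoset U x).
    rewrite -(card_in_imset (f := fun k => x ^ k) (D := mem K)); last first.
      move=> k l kK lK /= Exl.
      have : k * l^-1 \in 'C_K(N).
        rewrite inE groupM ?groupV //= defN cent_cycle; apply/cent1P.
        apply/commute_sym/commgP/conjg_fixP.
        by rewrite conjgM Exl conjgK.
      by rewrite CKN => /set1P /eqP; rewrite -eq_mulgV1 => /eqP.
    apply: subset_leq_card; apply/subsetP => _ /imsetP[k kK ->].
    by rewrite mem_lcoset; exact: inU.
  move: le; rewrite oK /U -orderE orderXdiv ox ?dvdn_exp2l // -expnB //.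
  move/(pow_le pr_p); clear -n2; lia.
have nk0 : k0 \in 'N(N) := subsetP nNK k0 k0K.
have k0G : k0 \in G := subsetP sKG k0 k0K.
pose phi := @Morphism gT gT N (fun z => [~ z, k0]) (@comm_morph gT N k0 abN nk0).
have skN : 'ker phi \subset N := subset_trans (ker_sub_pre phi 1) (subsetIl _ _).
have big : (p ^ n.-1 <= #|phi @* N|)%N.
  have cI : [~ x, k0] \in phi @* N := mem_morphim phi xN xN.
  have d1 := order_dvdG cI.
  have sphiN : phi @* N \subset N.
    by apply/subsetP => _ /morphimP[z _ zN ->]; exact: memR_norm.
  have d2 : #|phi @* N| %| p ^ n by rewrite -oN cardSg.
  have [a _ Ea] := dvdn_pfactor _ _ pr_p (dvdn_trans d1 d2).
  apply: leq_trans (dvdn_leq (cardG_gt0 _) d1).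
  rewrite Ea in ok0 *; rewrite leq_exp2l //.
  move: ok0; rewrite dvdn_Pexp2l //; clear -n2; lia.
have kerle : (#|'ker phi| <= p)%N.
  have L := Lagrange skN.
  have E : #|phi @* N| = #|N : 'ker phi| by rewrite card_morphim setIid.
  have : (#|'ker phi| * p ^ n.-1 <= p * p ^ n.-1)%N.
    rewrite -expnS prednK; last by apply: leq_trans n2.
    by rewrite -oN -L leq_mul2l -E big orbT.
  by rewrite leq_pmul2r ?expn_gt0 ?p0.
have step : forall (H : {group gT}) m, H \subset N -> G \subset 'N(H) ->
    #|H| = (p ^ m.+1)%N -> #|[~: H, G]| = (p ^ m)%N.
  move=> H m sHN nHG oH.
  have sHG := subset_trans sHN sNG.
  have prH : [~: H, G] \proper H.
    apply: nil_comm_properl nilG sHG _ _; last by rewrite subsetI subxx nHG.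
    rewrite trivg_card1 oH neq_ltn orbC -(expn0 p) ltn_exp2l //.
  have dv := cardSg (proper_sub prH); rewrite oH in dv.
  have [e le_em Ee] := dvdn_pfactor _ _ pr_p dv.
  have lt := proper_card prH; rewrite Ee oH ltn_exp2l // in lt.
  have sub : phi @* H \subset [~: H, G].
    by apply/subsetP => _ /morphimP[z _ zH ->]; exact: mem_commg zH k0G.
  have cH : #|phi @* H| = #|H : H :&: 'ker phi|.
    by rewrite card_morphim (setIidPr sHN) indexgI.
  have L := Lagrange (subsetIl H ('ker phi)).
  have kI : (#|H :&: 'ker phi| <= p)%N :=
    leq_trans (subset_leq_card (subsetIr _ _)) kerle.
  have : (p ^ m.+1 <= p ^ e.+1)%N.
    rewrite -oH -L expnS leq_mul // -Ee -cH.
    exact: subset_leq_card.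
  rewrite leq_exp2l // => le; rewrite Ee; congr (p ^ _)%N; clear -le lt; lia.
have lc : forall j, j < n -> 'L_j.+2(G) \subset N /\ #|'L_j.+2(G)| = (p ^ (n.-1 - j))%N.
  elim=> [|j IH] ltj.
    rewrite lcn2 derG subn0; split; first by rewrite commg_subl.
    apply: step => //; rewrite oN prednK //; apply: leq_trans n2.
  have [sLN oL] := IH (ltnW ltj).
  have nLG : G \subset 'N('L_j.+2(G)) := normal_norm (lcn_normal _ _).
  rewrite lcnSn; split.
    by apply: subset_trans sLN; rewrite commg_subl.
  apply: step => //; rewrite oL; congr (p ^ _)%N; clear -ltj; lia.
split.
  have [_ o2] := lc 0 (leq_trans (isT : 0 < 2) n2).
  rewrite lcn2 subn0 in o2.
  by rewrite -(divgS (der_sub 1 G)) oG o2 mulnK ?expn_gt0 ?p0.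
move=> i /andP[i2 iN].
have [j Ej] : exists j, i = j.+2.
  exists (i - 2); clear -i2; lia.
subst i.
have jn : j.+1 < n by [].
have [_ o1] := lc j (ltnW jn); have [_ o2] := lc j.+1 jn.
rewrite -(divgS (lcn_subS _ _)) o1 o2.
have -> : (n.-1 - j = (n.-1 - j.+1).+1)%N by clear -jn; lia.
by rewrite expnS mulnK ?expn_gt0 ?p0.
Qed.
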